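(* Let $\mathbf{X}$ be a set of discrete random variables with sample space $\Omega(\mathbf{X})$, let $o$ be a decomposable and smooth positive unital circuit (D-PUnC) whose root has scope $\mathbf{X}$, and let $\rho$ be a density matrix of the same size as the root operator. Then $p_{\mathbf{X}}(\mathbf{x})=\operatorname{Tr}[o(\mathbf{x})\rho]$ is a probability distribution on $\Omega(\mathbf{X})$: $p_{\mathbf{X}}(\mathbf{x})\ge 0$ for all $\mathbf{x}$ and $\sum_{\mathbf{x}\in\Omega(\mathbf{X})}p_{\mathbf{X}}(\mathbf{x})=1$.
   Context: A density matrix is a PSD complex matrix of trace one; a POVM is a finite family of PSD matrices summing to the identity. A quantum operation from $d\times d$ to $d'\times d'$ matrices is $\Phi(A)=\sum_jK_jAK_j^*$ with $d'\times d$ matrices $K_j$, $\sum_jK_j^*K_j\le\mathbb{1}$ (Loewner order); it is unital if $\Phi(\mathbb{1}_d)=\mathbb{1}_{d'}$. A positive unital circuit (in this unstructured form) over $\mathbf{X}$ is a rooted directed acyclic computation graph with three kinds of units. A leaf unit $k$ is associated with one variable $X_k$ (finite sample space $\Omega(X_k)$) and a POVM $\{e_{x}\}_{x\in\Omega(X_k)}$, and computes $o_k(x_k)=e_{x_k}$. A product unit $k$ has two inputs $k_l,k_r$ and computes $o_k=o_{k_l}(\mathbf{x}_{k_l})\otimes o_{k_r}(\mathbf{x}_{k_r})$ (Kronecker product). A sum unit $k$ with input set $\mathrm{in}(k)$ computes $o_k=\sum_{j\in\mathrm{in}(k)}w_{kj}\Phi_{kj}(o_j(\mathbf{x}_j))$,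 where the $\Phi_{kj}$ are unital quantum operations into a common matrix size and $w_{kj}>0$ are reals with $\sum_jw_{kj}=1$. The scope $\phi(k)$ of a unit is $\{X_k\}$ for a leaf and the union of the scopes of its inputs otherwise; $\mathbf{x}_k$ is an assignment to $\phi(k)$, and $o(\mathbf{x})$ denotes the root's output. The circuit is decomposable if for every product unit $\phi(k_l)\cap\phi(k_r)=\emptyset$, and smooth if all inputs of every sum unit have the same scope. *)

(* Defs.v *)
(* Scalars: an arbitrary numClosedFieldType C (e.g. complex R
   for a real closed field R, or algC); order/positivity on C is the canonical
   partial order (0 <= z  iff  z is real and nonnegative). *)
From HB Require Import structures.
From mathcomp Require Import all_boot all_order all_algebra.
From mathcomp Require Import mxtens.
Set Implicit Arguments. Unset Strict Implicit. Unset Printing Implicit Defensive.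
Import Order.TTheory GRing.Theory Num.Theory.
Local Open Scope ring_scope.

Section Defs.
Variable C : numClosedFieldType.

Definition adjmx m n (A : 'M[C]_(m, n)) : 'M[C]_(n, m) := (map_mx Num.conj A)^T.

Definition psd n (A : 'M[C]_n) : Prop :=
  adjmx A = A /\ forall v : 'cV[C]_n, 0 <= (adjmx v *m A *m v) 0 0.

Definition loewner_le n (A B : 'M[C]_n) : Prop := psd (B - A).

Definition density_matrix n (rho : 'M[C]_n) : Prop := psd rho /\ \tr rho = 1.

Definition is_POVM (I : finType) n (e : I -> 'M[C]_n) : Prop :=
  (forall i, psd (e i)) /\ \sum_(i : I) e i = 1%:M.

Definition qop_apply d' d m (K : 'I_m -> 'M[C]_(d', d)) (A : 'M[C]_d) : 'M[C]_d' :=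
  \sum_(j < m) K j *m A *m adjmx (K j).

Definition is_quantum_operation d' d m (K : 'I_m -> 'M[C]_(d', d)) : Prop :=
  loewner_le (\sum_(j < m) adjmx (K j) *m K j) 1%:M.

Definition is_unital_qop d' d m (K : 'I_m -> 'M[C]_(d', d)) : Prop :=
  is_quantum_operation K /\ qop_apply K 1%:M = 1%:M.

Variable V : finType.
Variable Omega : V -> finType.

(* A rooted DAG is represented by its tree unfolding (shared sub-units are
   duplicated), which has the same outputs, scopes, decomposability and
   smoothness. *)
Inductive circuit : nat -> Type :=
| Leaf (d : nat) (v : V) (e : Omega v -> 'M[C]_d) : circuit d
| Prod (d1 d2 : nat) (l : circuit d1) (r : circuit d2) : circuit (d1 * d2)
| Sum (d n : nat) (din : 'I_n -> nat) (ch : forall j : 'I_n, circuit (din j))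
      (w : 'I_n -> C) (m : 'I_n -> nat)
      (K : forall j : 'I_n, 'I_(m j) -> 'M[C]_(d, din j)) : circuit d.

Fixpoint scope d (c : circuit d) : {set V} :=
  match c with
  | Leaf _ v _ => [set v]
  | Prod _ _ l r => scope l :|: scope r
  | Sum _ n _ ch _ _ _ => \bigcup_(j < n) scope (ch j)
  end.

Fixpoint eval d (c : circuit d) (x : forall v : V, Omega v) : 'M[C]_d :=
  match c in circuit d return 'M[C]_d with
  | Leaf _ v e => e (x v)
  | Prod _ _ l r => eval l x *t eval r x
  | Sum _ n _ ch w _ K => \sum_(j < n) w j *: qop_apply (K j) (eval (ch j) x)
  end.

Fixpoint is_PUnC d (c : circuit d) : Prop :=
  match c with
  | Leaf _ v e => is_POVM e
  | Prod _ _ l r => is_PUnC l /\ is_PUnC r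
  | Sum _ n _ ch w _ K =>
      (forall j, is_PUnC (ch j)) /\
      (forall j, w j \is Num.real /\ 0 < w j) /\ \sum_(j < n) w j = 1 /\
      (forall j, is_unital_qop (K j))
  end.

Fixpoint decomposable d (c : circuit d) : Prop :=
  match c with
  | Leaf _ _ _ => True
  | Prod _ _ l r => decomposable l /\ decomposable r /\ [disjoint scope l & scope r]
  | Sum _ n _ ch _ _ _ => forall j, decomposable (ch j)
  end.

Fixpoint smooth d (c : circuit d) : Prop :=
  match c with
  | Leaf _ _ _ => True
  | Prod _ _ l r => smooth l /\ smooth r
  | Sum _ n _ ch _ _ _ =>
      (forall j, smooth (ch j)) /\ (forall j k, scope (ch j) = scope (ch k))
  end.

End Defs.

(* Main.v *)
Require Import Defs.
From HB Require Import structures.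
From mathcomp Require Import all_boot all_order all_algebra.
From mathcomp Require Import mxtens spectral.
Set Implicit Arguments. Unset Strict Implicit. Unset Printing Implicit Defensive.
Import Order.TTheory GRing.Theory Num.Theory.
Local Open Scope ring_scope.

Section Mx.
Variable C : numClosedFieldType.

Lemma adjmxK m n (A : 'M[C]_(m, n)) : adjmx (adjmx A) = A.
Proof. by apply/matrixP=> i j; rewrite !mxE conjCK. Qed.

Lemma adjmxM m n p (A : 'M[C]_(m, n)) (B : 'M[C]_(n, p)) :
  adjmx (A *m B) = adjmx B *m adjmx A.
Proof. by rewrite /adjmx map_mxM trmx_mul. Qed.

Lemma adjmxD m n (A B : 'M[C]_(m, n)) : adjmx (A + B) = adjmx A + adjmx B.
Proof. by apply/matrixP=> i j; rewrite !mxE rmorphD. Qed.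

Lemma adjmxZ m n c (A : 'M[C]_(m, n)) : adjmx (c *: A) = c^* *: adjmx A.
Proof. by apply/matrixP=> i j; rewrite !mxE rmorphM. Qed.

Lemma adjmx1 n : adjmx (1%:M : 'M[C]_n) = 1%:M.
Proof. by apply/matrixP=> i j; rewrite !mxE rmorph_nat eq_sym. Qed.

Lemma adjmxT m n p q (A : 'M[C]_(m, n)) (B : 'M[C]_(p, q)) :
  adjmx (A *t B) = adjmx A *t adjmx B.
Proof. by apply/matrixP=> i j; rewrite !mxE rmorphM. Qed.

Lemma gram_ge0 n (y : 'cV[C]_n) : 0 <= (adjmx y *m y) 0 0.
Proof.
rewrite mxE; apply: sumr_ge0 => j _; rewrite !mxE mulrC; exact: mul_conjC_ge0.
Qed.

Lemma psd_gram n k (W : 'M[C]_(n, k)) : psd (W *m adjmx W).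
Proof.
split; first by rewrite adjmxM adjmxK.
move=> v; have -> : adjmx v *m (W *m adjmx W) *m v
   = adjmx (adjmx W *m v) *m (adjmx W *m v).
  by rewrite adjmxM adjmxK !mulmxA.
exact: gram_ge0.
Qed.

Lemma psd_conj n k (K : 'M[C]_(k, n)) A : psd A -> psd (K *m A *m adjmx K).
Proof.
move=> [hA qA]; split; first by rewrite !adjmxM adjmxK hA mulmxA.
move=> v; have -> : adjmx v *m (K *m A *m adjmx K) *m v
   = adjmx (adjmx K *m v) *m A *m (adjmx K *m v).
  by rewrite adjmxM adjmxK !mulmxA.
exact: qA.
Qed.

Lemma psd0 n : psd (0 : 'M[C]_n).
Proof.
split; first by apply/matrixP=> i j; rewrite !mxE rmorph0.
by move=> v; rewrite mulmx0 mul0mx mxE.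
Qed.

Lemma psdD n (A B : 'M[C]_n) : psd A -> psd B -> psd (A + B).
Proof.
move=> [hA qA] [hB qB]; split; first by rewrite adjmxD hA hB.
by move=> v; rewrite mulmxDr mulmxDl mxE addr_ge0.
Qed.

Lemma psd_sum n (I : Type) (r : seq I) (P : pred I) (F : I -> 'M[C]_n) :
  (forall i, P i -> psd (F i)) -> psd (\sum_(i <- r | P i) F i).
Proof.
move=> H; elim/big_ind: _ => //; [exact: psd0 | exact: psdD].
Qed.

Lemma psdZ n c (A : 'M[C]_n) : 0 <= c -> psd A -> psd (c *: A).
Proof.
move=> c0 [hA qA]; split; first by rewrite adjmxZ hA conj_Creal ?ger0_real.
move=> v; rewrite -scalemxAr -scalemxAl mxE; exact: mulr_ge0.
Qed.

Lemma adjmx_delta n (i : 'I_n) : adjmx (delta_mx i 0 : 'cV[C]_n) = delta_mx 0 i.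
Proof. by apply/matrixP=> a b; rewrite !mxE rmorph_nat andbC. Qed.

Lemma psd_gram_exists n (A : 'M[C]_n) : psd A ->
  exists W : 'M[C]_(n, n), A = W *m adjmx W.
Proof.
move=> [hA qA].
have nA : A \is normalmx.
  apply/normalmxP; rewrite -map_trmx.
  by have -> : (map_mx Num.conj A)^T = A by exact: hA.
have /orthomx_spectralP := nA.
set P := spectralmx A; set sp := spectral_diag A.
have Pu : P \is unitarymx by exact: spectral_unitarymx.
rewrite invmx_unitary // => eA.
have PPt : P *m adjmx P = 1%:M.
  by rewrite /adjmx map_trmx; apply/unitarymxP.
have eA' : A = adjmx P *m diag_mx sp *m P by rewrite /adjmx map_trmx.
have sp0 : forall i, 0 <= sp 0 i.
  move=> i; have := qA (adjmx P *m delta_mx i 0).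
  rewrite adjmxM adjmxK adjmx_delta.
  have -> : (delta_mx 0 i : 'rV[C]_n) *m P *m A *m (adjmx P *m (delta_mx i 0 : 'cV[C]_n))
     = (delta_mx 0 i : 'rV[C]_n) *m diag_mx sp *m (delta_mx i 0 : 'cV[C]_n).
    rewrite {1}eA' !mulmxA -(mulmxA _ P (adjmx P)) PPt mulmx1.
    by rewrite -(mulmxA _ P (adjmx P)) PPt mulmx1.
  rewrite -rowE -colE !mxE eqxx mulr1n.
  done.
exists (adjmx P *m diag_mx (\row_j sqrtC (sp 0 j))).
rewrite adjmxM adjmxK {1}eA' !mulmxA; congr (_ *m _).
rewrite -mulmxA; congr (_ *m _).
rewrite mul_diag_mx; apply/matrixP=> i j; rewrite !mxE.
case: (eqVneq i j) => [<-|nij]; last by rewrite !mulr0n rmorph0 mulr0.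
rewrite !mulr1n conj_Creal ?ger0_real ?sqrtC_ge0 // -expr2 sqrtCK.
done.
Qed.


Lemma psd_tens m n (A : 'M[C]_m) (B : 'M[C]_n) : psd A -> psd B -> psd (A *t B).
Proof.
move=> /psd_gram_exists [W ->] /psd_gram_exists [U ->].
by rewrite -tensmx_mul -adjmxT; apply: psd_gram.
Qed.

Lemma tr_gram_ge0 n k (W : 'M[C]_(n, k)) : 0 <= \tr (W *m adjmx W).
Proof.
apply: sumr_ge0 => i _; rewrite mxE; apply: sumr_ge0 => j _.
by rewrite !mxE; exact: mul_conjC_ge0.
Qed.

Lemma tr_psd_mul n (A B : 'M[C]_n) : psd A -> psd B -> 0 <= \tr (A *m B).
Proof.
move=> /psd_gram_exists [W ->] /psd_gram_exists [U ->].
rewrite !mulmxA mxtrace_mulC !mulmxA -(mulmxA _ (adjmx W)) -[adjmx W *m U]adjmxK adjmxM adjmxK.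
exact: tr_gram_ge0.
Qed.

Lemma tensmxDl m n p q (A B : 'M[C]_(m, n)) (D : 'M[C]_(p, q)) :
  (A + B) *t D = A *t D + B *t D.
Proof. by apply/matrixP=> i j; rewrite !mxE mulrDl. Qed.

Lemma tensmxDr m n p q (A : 'M[C]_(m, n)) (B D : 'M[C]_(p, q)) :
  A *t (B + D) = A *t B + A *t D.
Proof. by apply/matrixP=> i j; rewrite !mxE mulrDr. Qed.

Lemma tensmx_suml m n p q (I : Type) (r : seq I) (P : pred I)
  (F : I -> 'M[C]_(m, n)) (D : 'M[C]_(p, q)) :
  (\sum_(i <- r | P i) F i) *t D = \sum_(i <- r | P i) (F i *t D).
Proof.
apply: (big_morph (fun M => M *t D)); first by move=> x y; rewrite tensmxDl.
by rewrite tens0mx.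
Qed.

Lemma tensmx_sumr m n p q (I : Type) (r : seq I) (P : pred I)
  (A : 'M[C]_(m, n)) (F : I -> 'M[C]_(p, q)) :
  A *t (\sum_(i <- r | P i) F i) = \sum_(i <- r | P i) (A *t F i).
Proof.
apply: (big_morph (fun M => A *t M)); first by move=> x y; rewrite tensmxDr.
by rewrite tensmx0.
Qed.

Lemma tensmx11 m n : (1%:M : 'M[C]_m) *t (1%:M : 'M[C]_n) = 1%:M.
Proof.
apply/matrixP=> i j.
case: (mxtens_indexP i) => i0 i1; case: (mxtens_indexP j) => j0 j1.
rewrite tensmxE !mxE (can_eq (@mxtens_indexK m n)) xpair_eqE.
by case: (i0 == j0); case: (i1 == j1); rewrite ?mulr1 ?mulr0.
Qed.

End Mx.

Section Circ.
Variable C : numClosedFieldType.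
Variable V : finType.
Variable Omega : V -> finType.

Definition assign := {dffun forall v : V, Omega v}.
Definition agree (S : {set V}) (x y : assign) : bool :=
  [forall v, (v \notin S) ==> (x v == y v)].

Lemma eval_local d (c : circuit C Omega d) (x y : forall v, Omega v) :
  (forall v, v \in scope c -> x v = y v) -> eval c x = eval c y.
Proof.
elim: c x y => [d' v e | d1 d2 l IHl r IHr | d' n din ch IH w m K] x y H /=.
- by rewrite H // inE.
- rewrite (IHl x y) ?(IHr x y) // => u hu; apply: H; rewrite inE hu ?orbT //.
- apply: eq_bigr => j _; rewrite (IH j x y) // => u hu; apply: H.
  by apply/bigcupP; exists j.
Qed.

Lemma psd_eval d (c : circuit C Omega d) x : is_PUnC c -> psd (eval c x).
Proof.
elim: c => [d' v e | d1 d2 l IHl r IHr | d' n din ch IH w m K] /=.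
- by case=> H _.
- by case=> hl hr; apply: psd_tens; [apply: IHl | apply: IHr].
- case=> hch [hw [_ hK]]; apply: psd_sum => j _; apply: psdZ.
    by apply: ltW; case: (hw j).
  by apply: psd_sum => k _; apply: psd_conj; apply: IH.
Qed.

Lemma mx0_eq1 d : (0 : 'M[C]_d) = 1%:M -> d = 0%N.
Proof.
case: d => // d /matrixP/(_ ord0 ord0); rewrite !mxE eqxx /= => /eqP.
by rewrite eq_sym oner_eq0.
Qed.

Lemma dim0 d (c : circuit C Omega d) v : is_PUnC c -> v \in scope c ->
  (Omega v -> False) -> d = 0%N.
Proof.
move=> + + hE.
elim: c => [d' v' e | d1 d2 l IHl r IHr | d' n din ch IH w m K] /=.
- case=> _ hsum; rewrite inE => /eqP ev; subst v'.
  apply: mx0_eq1; rewrite -hsum big1 // => a _; case: (hE a).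
- case=> hl hr /setUP [h|h]; first by rewrite (IHl hl h).
  by rewrite (IHr hr h) muln0.
- case=> hch [_ [_ hK]] /bigcupP [j _ hj].
  have dj := IH j (hch j) hj.
  have [_ hu] := hK j.
  have e1 : (1%:M : 'M[C]_(din j)) = 0.
    by apply/matrixP=> a; have := ltn_ord a; rewrite {2}dj.
  move: hu; rewrite e1 /qop_apply big1 => [|k _]; last by rewrite mulmx0 mul0mx.
  exact: mx0_eq1.
Qed.

Lemma qop_sum d' d m (K : 'I_m -> 'M[C]_(d', d)) (I : Type) (r : seq I)
   (P : pred I) (F : I -> 'M[C]_d) :
  \sum_(i <- r | P i) qop_apply K (F i) = qop_apply K (\sum_(i <- r | P i) F i).
Proof.
rewrite /qop_apply exchange_big; apply: eq_bigr => k _.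
by rewrite mulmx_sumr mulmx_suml.
Qed.

Lemma agree_split (M : nmodType) (S1 S2 : {set V}) x (F : assign -> M) :
  [disjoint S1 & S2] ->
  \sum_(y | agree (S1 :|: S2) x y) F y =
  \sum_(y1 | agree S1 x y1) \sum_(y2 | agree S2 y1 y2) F y2.
Proof.
move=> dis; symmetry.
rewrite (exchange_big_dep (agree (S1 :|: S2) x)) /=; last first.
  move=> y1 y2 /forallP h1 /forallP h2; apply/forallP => u; apply/implyP.
  rewrite inE negb_or => /andP [n1 n2].
  by rewrite (eqP (implyP (h1 u) n1)) (implyP (h2 u) n2).
apply: eq_bigr => y2 /forallP h.
pose mg : assign := [ffun u => if u \in S1 then y2 u else x u].
rewrite (big_pred1 mg) // => y1 /=.
apply/andP/eqP => [[/forallP h1 /forallP h2]|->].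
  apply/ffunP => u; rewrite ffunE; case: ifP => hu.
    by apply/eqP/(implyP (h2 u)); rewrite (disjointFr dis hu).
  by apply/esym/eqP/(implyP (h1 u)); rewrite hu.
split; apply/forallP => u; apply/implyP => hu; rewrite ffunE.
  by rewrite (negPf hu).
case: ifP => // h1.
by apply/(implyP (h u)); rewrite inE negb_or h1.
Qed.


Lemma norm_eval d (c : circuit C Omega d) : is_PUnC c -> decomposable c ->
  smooth c -> forall x : assign, \sum_(y | agree (scope c) x y) eval c y = 1%:M.
Proof.
elim: c => [d' v e | d1 d2 l IHl r IHr | d' n din ch IH w m K] /=.
- case=> _ hsum _ _ x.
  rewrite (partition_big (fun y : assign => y v) xpredT) //= -hsum.
  apply: eq_bigr => a _.
  pose ua : assign := [ffun u => @dfwith V Omega x v a u].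
  rewrite (big_pred1 ua) => [|y]; first by rewrite ffunE dfwith_in.
  apply/andP/eqP => [[/forallP hag /eqP hya]|->].
    apply/ffunP => u; rewrite ffunE; case: (eqVneq v u) => [<-|nvu].
      by rewrite dfwith_in.
    rewrite dfwith_out //; apply/esym/eqP/(implyP (hag u)).
    by rewrite inE eq_sym.
  split; last by rewrite ffunE dfwith_in.
  apply/forallP => u; apply/implyP; rewrite inE => hu.
  by rewrite ffunE dfwith_out // eq_sym.
- case=> pl pr [dl [dr dis]] [sl sr] x.
  rewrite agree_split // -[RHS]tensmx11 -(IHl pl dl sl x) tensmx_suml.
  apply: eq_bigr => y1 h1; rewrite -(IHr pr dr sr y1) tensmx_sumr.
  apply: eq_bigr => y2 /forallP h2; congr (_ *t _).
  apply: eval_local => u hu; apply/esym/eqP/(implyP (h2 u)).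
  by rewrite (disjointFr dis hu).
- case=> hch [hw [hs hK]] hd [hsm hsc] x.
  have e1 : (1%:M : 'M[C]_d') = (\sum_j w j) *: 1%:M by rewrite hs scale1r.
  rewrite exchange_big /= [RHS]e1 scaler_suml.
  apply: eq_bigr => j _; rewrite -scaler_sumr; congr (_ *: _).
  have -> : \bigcup_(k < n) scope (ch k) = scope (ch j).
    apply/setP => u; apply/bigcupP/idP => [[k _ hk]|hu].
      by rewrite (hsc k j) in hk.
    by exists j.
  rewrite qop_sum (IH j (hch j) (hd j) (hsm j) x).
  by case: (hK j).
Qed.

End Circ.

Theorem theorem3 (C : numClosedFieldType) (V : finType) (Omega : V -> finType)
    (d : nat) (o : circuit C Omega d) (rho : 'M[C]_d) :
  is_PUnC o -> decomposable o -> smooth o -> scope o = [set: V] ->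
  density_matrix rho ->
  (forall x : {dffun forall v : V, Omega v}, 0 <= \tr (eval o x *m rho)) /\
  \sum_(x : {dffun forall v : V, Omega v}) \tr (eval o x *m rho) = 1.
Proof.
move=> hP hD hS hsc [hrho htr]; split.
  by move=> x; apply: tr_psd_mul => //; apply: psd_eval.
have Hex : forall v, exists a : Omega v, true.
  move=> v; case: (pickP (fun a : Omega v => true)) => [a _|H]; first by exists a.
  exfalso.
  have hv : v \in scope o by rewrite hsc inE.
  have hE : Omega v -> False by move=> a; have := H a.
  have d0 := dim0 hP hv hE.
  subst d; move: htr; rewrite /mxtrace big_ord0 => /eqP.
  by rewrite eq_sym oner_eq0.
pose x0 : assign Omega := [ffun v => xchoose (Hex v)].
have trS : forall (I : finType) (F : I -> 'M[C]_d),
    \sum_i \tr (F i) = \tr (\sum_i F i).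
  move=> I F; apply/esym/(big_morph (@mxtrace _ d)); first exact: mxtraceD.
  exact: mxtrace0.
rewrite trS -mulmx_suml.
have -> : \sum_(x : {dffun forall v : V, Omega v}) eval o x
    = \sum_(y | agree (scope o) x0 y) eval o y.
  by apply: eq_bigl => y; apply/esym/forallP => v; rewrite hsc inE.
by rewrite norm_eval // mul1mx.
Qed.
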